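(* Let $\rho_\mathcal{A}$ be an antisymmetric state on $\mathbb{C}^d\otimes\mathbb{C}^d$ and let $p^\textrm{PPT}(\rho_\mathcal{A})$ be the optimal value of the semidefinite program: maximize $\operatorname{Tr}(P_\mathcal{A}\sigma)$ over $\sigma$ subject to $P_\mathcal{A}\sigma P_\mathcal{A} = \operatorname{Tr}(P_\mathcal{A}\sigma)\rho_\mathcal{A}$, $\sigma\geq 0$, $\operatorname{Tr}(\sigma)=1$, $\sigma^\Gamma\geq 0$. If $p^\textrm{PPT}(\rho_\mathcal{A})<1/2$, then any optimal state $\sigma^*$ of this program (a PPT state with $P_\mathcal{A}\sigma^*P_\mathcal{A}=p^\textrm{PPT}(\rho_\mathcal{A})\rho_\mathcal{A}$) is entangled, hence PPT entangled.
   Context: $V$ is the swap operator on $\mathbb{C}^d\otimes\mathbb{C}^d$, $P_\mathcal{A}=(\mathbb{1}-V)/2$ is the projector onto the antisymmetric subspace (with $\mathbb{1}$ the identity operator). An antisymmetric state satisfies $\rho_\mathcal{A}=P_\mathcal{A}\rho_\mathcal{A}P_\mathcal{A}$. A state is separable if it is of the form $\sum_k q_k |\alpha_k\rangle\langle\alpha_k|\otimes|\beta_k\rangle\langle\beta_k|$; $\sigma^\Gamma$ is the partial transpose. *)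

(* Defs.v *)
(* Matrices on C^d (x) C^d are 'M[C]_(d * d), with the
   product basis index (i, j) encoded as mxtens_index (i, j) (from
   mathcomp real_closed's mxtens.v, which also provides the Kronecker
   product A *t B). C is an arbitrary numClosedFieldType (e.g. algC or
   complex R for a real closed field R), the numeric-closed analogue of C. *)
From HB Require Import structures.
From mathcomp Require Import all_boot all_order all_algebra.
From mathcomp Require Export mxtens.
Set Implicit Arguments. Unset Strict Implicit. Unset Printing Implicit Defensive.
Import Order.TTheory GRing.Theory Num.Theory.
Local Open Scope ring_scope.

Section Defs.
Variable C : numClosedFieldType.

Definition adjmx {m n} (A : 'M[C]_(m, n)) : 'M[C]_(n, m) :=
  map_mx Num.conj (A^T).

Definition psd {n} (A : 'M[C]_n) : Prop :=
  adjmx A = A /\ forall v : 'cV[C]_n, 0 <= (adjmx v *m A *m v) 0 0.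

Definition is_state {n} (A : 'M[C]_n) : Prop := psd A /\ \tr A = 1.

Definition swapop (d : nat) : 'M[C]_(d * d) :=
  \matrix_(a, b) ((((mxtens_unindex a).1 == (mxtens_unindex b).2) &&
                   ((mxtens_unindex a).2 == (mxtens_unindex b).1))%:R).

Definition PA (d : nat) : 'M[C]_(d * d) := 2^-1 *: (1%:M - swapop d).

Definition antisym_state (d : nat) (rho : 'M[C]_(d * d)) : Prop :=
  is_state rho /\ rho = PA d *m rho *m PA d.

(* partial transpose on the second factor:
   <i k| s^Gamma |j l> = <i l| s |j k> *)
Definition ptrans (d : nat) (s : 'M[C]_(d * d)) : 'M[C]_(d * d) :=
  \matrix_(a, b) s (mxtens_index ((mxtens_unindex a).1, (mxtens_unindex b).2))
                   (mxtens_index ((mxtens_unindex b).1, (mxtens_unindex a).2)).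

Definition unitvec {n} (v : 'cV[C]_n) : Prop := (adjmx v *m v) 0 0 = 1.
Definition ketbra {n} (v : 'cV[C]_n) : 'M[C]_n := v *m adjmx v.

Definition separable (d : nat) (s : 'M[C]_(d * d)) : Prop :=
  exists (N : nat) (q : 'I_N -> C) (al be : 'I_N -> 'cV[C]_d),
    [/\ forall k, 0 <= q k,
        \sum_k q k = 1,
        forall k, unitvec (al k) /\ unitvec (be k)
      & s = \sum_k q k *: (ketbra (al k) *t ketbra (be k))].

Definition entangled (d : nat) (s : 'M[C]_(d * d)) : Prop := ~ separable s.

Definition ppt_feasible (d : nat) (rho s : 'M[C]_(d * d)) : Prop :=
  [/\ PA d *m s *m PA d = \tr (PA d *m s) *: rho,
      psd s, \tr s = 1 & psd (ptrans s)].

Definition ppt_optimal (d : nat) (rho s : 'M[C]_(d * d)) : Prop :=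
  ppt_feasible rho s /\
  forall s', ppt_feasible rho s' -> \tr (PA d *m s') <= \tr (PA d *m s).

End Defs.
Arguments PA {C} d.
Arguments swapop {C} d.

(* Main.v *)
Require Import Defs.
From HB Require Import structures.
From mathcomp Require Import all_boot all_order all_algebra.
Import Order.TTheory GRing.Theory Num.Theory.
Local Open Scope ring_scope.
From mathcomp Require Import mxtens ring.
Set Implicit Arguments. Unset Strict Implicit. Unset Printing Implicit Defensive.
Section H.
Variable C : numClosedFieldType.
Local Notation adj := (@adjmx C _ _).

Lemma adjmxK m n (A : 'M[C]_(m, n)) : adjmx (adjmx A) = A.
Proof. by apply/matrixP=> i j; rewrite !mxE conjCK. Qed.

Lemma adjmxM m n p (A : 'M[C]_(m, n)) (B : 'M[C]_(n, p)) :
  adjmx (A *m B) = adjmx B *m adjmx A.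
Proof. by rewrite /adjmx trmx_mul map_mxM. Qed.

Lemma adjmxD m n (A B : 'M[C]_(m, n)) : adjmx (A + B) = adjmx A + adjmx B.
Proof. by apply/matrixP=> i j; rewrite !mxE rmorphD. Qed.

Lemma adjmxZ m n a (A : 'M[C]_(m, n)) : adjmx (a *: A) = a^* *: adjmx A.
Proof. by apply/matrixP=> i j; rewrite !mxE rmorphM. Qed.

Lemma adjmx_sum m n (I : finType) (F : I -> 'M[C]_(m, n)) :
  adjmx (\sum_i F i) = \sum_i adjmx (F i).
Proof. apply/matrixP=> i j; rewrite /adjmx !mxE !summxE rmorph_sum; apply: eq_bigr => k _; by rewrite !mxE. Qed.

Lemma adjmx1 n : adjmx (1%:M : 'M[C]_n) = 1%:M.
Proof. by apply/matrixP=> i j; rewrite /adjmx !mxE rmorph_nat eq_sym. Qed.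

Lemma adjmx_tens m n p q (A : 'M[C]_(m, n)) (B : 'M[C]_(p, q)) :
  adjmx (A *t B) = adjmx A *t adjmx B.
Proof. by apply/matrixP=> i j; rewrite !mxE rmorphM. Qed.

Definition bf n (M : 'M[C]_n) (u v : 'cV[C]_n) := (adjmx u *m M *m v) 0 0.
Definition ip n (u v : 'cV[C]_n) := (adjmx u *m v) 0 0.

Lemma ipE n (u v : 'cV[C]_n) : ip u v = \sum_a (u a 0)^* * v a 0.
Proof. by rewrite /ip mxE; apply: eq_bigr => a _; rewrite !mxE. Qed.

Lemma ip_conj n (u v : 'cV[C]_n) : ip v u = (ip u v)^*.
Proof. rewrite !ipE rmorph_sum; apply: eq_bigr => a _; by rewrite rmorphM /= conjCK mulrC. Qed.

Lemma ipvv_ge0 n (v : 'cV[C]_n) : 0 <= ip v v.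
Proof. rewrite ipE; apply: sumr_ge0 => a _; rewrite mulrC; exact: mul_conjC_ge0. Qed.

Lemma tens_cV m n (u : 'cV[C]_m) (w : 'cV[C]_n) i j :
  (u *t w) (mxtens_index (i, j)) 0 = u i 0 * w j 0.
Proof. by rewrite mxE mxtens_indexK /=; congr (u _ _ * w _ _); apply: val_inj. Qed.

Lemma sum_tens m n (F : 'I_(m * n) -> C) :
  \sum_a F a = \sum_i \sum_j F (mxtens_index (i, j)).
Proof.
rewrite pair_big /= (reindex (@mxtens_index m n)) /=; last first.
  by exists (@mxtens_unindex m n) => x _; rewrite ?mxtens_indexK ?mxtens_unindexK.
by apply: eq_bigr => -[i j].
Qed.

Definition kron m n (u : 'cV[C]_m) (w : 'cV[C]_n) : 'cV[C]_(m * n) :=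
  \col_a (u (mxtens_unindex a).1 0 * w (mxtens_unindex a).2 0).

Lemma kronE m n (u : 'cV[C]_m) (w : 'cV[C]_n) i j :
  kron u w (mxtens_index (i, j)) 0 = u i 0 * w j 0.
Proof. by rewrite mxE mxtens_indexK. Qed.

Lemma ip_kron m n (a c : 'cV[C]_m) (b e : 'cV[C]_n) :
  ip (kron a b) (kron c e) = ip a c * ip b e.
Proof.
rewrite !ipE sum_tens mulr_suml; apply: eq_bigr => i _.
rewrite mulr_sumr; apply: eq_bigr => j _.
rewrite !kronE rmorphM /=; ring.
Qed.

Lemma sum_delta2 n (i j : 'I_n) (F : 'I_n -> 'I_n -> C) :
  \sum_x \sum_y ((i == y) && (j == x))%:R * F x y = F j i.
Proof.
rewrite (bigD1 j) //= [X in _ + X]big1 ?addr0; last first.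
  move=> x /negbTE xj; apply: big1 => y _; by rewrite [j == x]eq_sym xj andbF mul0r.
rewrite (bigD1 i) //= [X in _ + X]big1 ?addr0 ?eqxx ?mul1r // => y /negbTE iy.
by rewrite eq_sym iy mul0r.
Qed.

Lemma swapE d i j k l :
  swapop d (mxtens_index (i, j)) (mxtens_index (k, l)) = ((i == l) && (j == k))%:R :> C.
Proof. by rewrite mxE !mxtens_indexK. Qed.

Lemma swap_kron d (u w : 'cV[C]_d) : swapop d *m kron u w = kron w u.
Proof.
apply/matrixP => a b; rewrite [b]ord1; case: (mxtens_indexP a) => i j.
rewrite mxE sum_tens kronE.
under eq_bigr => x _ do under eq_bigr => y _ do rewrite swapE kronE.
by rewrite sum_delta2 mulrC.
Qed.

Lemma swap2 d : swapop d *m swapop d = 1%:M :> 'M[C]_(d * d).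
Proof.
apply/matrixP => a c; case: (mxtens_indexP a) => i j; case: (mxtens_indexP c) => k l.
rewrite mxE sum_tens.
under eq_bigr => x _ do under eq_bigr => y _ do rewrite !swapE.
rewrite sum_delta2 !mxE (inj_eq (can_inj (@mxtens_indexK _ _))) xpair_eqE.
by rewrite andbC.
Qed.

Lemma adj_swap d : adjmx (swapop d) = swapop d :> 'M[C]_(d * d).
Proof.
apply/matrixP => a c; case: (mxtens_indexP a) => i j; case: (mxtens_indexP c) => k l.
rewrite /adjmx !mxE !mxtens_indexK /= rmorph_nat.
by rewrite [k == j]eq_sym [l == i]eq_sym andbC.
Qed.

Lemma adj_PA d : adjmx (PA d) = PA d :> 'M[C]_(d * d).
Proof.
rewrite /PA adjmxZ adjmxD.
have -> : adjmx (- swapop d) = - swapop d :> 'M[C]_(d*d).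
  by rewrite -scaleN1r adjmxZ adj_swap rmorphN1 scaleN1r.
by rewrite adjmx1 geC0_conj // invr_ge0 ler0n.
Qed.

Lemma PA_kron_same d (u : 'cV[C]_d) : PA d *m kron u u = 0.
Proof. by rewrite /PA -scalemxAl mulmxBl mul1mx swap_kron subrr scaler0. Qed.

Lemma PA2 d : PA d *m PA d = PA d :> 'M[C]_(d * d).
Proof.
rewrite /PA -scalemxAl -scalemxAr scalerA mulmxBl mul1mx mulmxBr mulmx1 swap2.
have -> : 1%:M - swapop d - (swapop d - 1%:M) = 2%:R *: (1%:M - swapop d) :> 'M[C]_(d*d).
  by rewrite scaler_nat mulr2n opprB addrA.
by rewrite scalerA -mulrA mulVf ?mulr1 // pnatr_eq0.
Qed.


Lemma mx11_mulE n (P : 'M[C]_(1, n)) (Q : 'M[C]_(n, 1)) (R : 'M[C]_(1,1)) :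
  (R *m (P *m Q)) 0 0 = R 0 0 * (P *m Q) 0 0.
Proof. by rewrite mxE big_ord1. Qed.

Lemma ketbraE n (x : 'cV[C]_n) a b : ketbra x a b = x a 0 * (x b 0)^*.
Proof. by rewrite /ketbra mxE big_ord1 !mxE. Qed.

Lemma adj_ketbra n (x : 'cV[C]_n) : adjmx (ketbra x) = ketbra x.
Proof. by rewrite /ketbra adjmxM adjmxK. Qed.

Lemma bf_ketbra n (x v : 'cV[C]_n) : bf (ketbra x) v v = ip v x * (ip v x)^*.
Proof.
by rewrite /bf /ketbra mulmxA -mulmxA mx11_mulE -/(ip x v) ip_conj.
Qed.

Lemma bf_sum n N (q : 'I_N -> C) (M : 'I_N -> 'M[C]_n) v :
  bf (\sum_k q k *: M k) v v = \sum_k q k * bf (M k) v v.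
Proof.
rewrite /bf mulmx_sumr mulmx_suml summxE; apply: eq_bigr => k _.
by rewrite -scalemxAr -scalemxAl mxE.
Qed.

Lemma psd_ketbra_sum n N (q : 'I_N -> C) (x : 'I_N -> 'cV[C]_n) :
  (forall k, 0 <= q k) -> psd (\sum_k q k *: ketbra (x k)).
Proof.
move=> q0; split.
  rewrite adjmx_sum; apply: eq_bigr => k _.
  by rewrite adjmxZ adj_ketbra geC0_conj.
move=> v; rewrite -/(bf _ v v) bf_sum; apply: sumr_ge0 => k _.
by rewrite bf_ketbra mulr_ge0 // mul_conjC_ge0.
Qed.

Lemma bfE n (M : 'M[C]_n) u v : bf M u v = \sum_a \sum_b (u a 0)^* * M a b * v b 0.
Proof.
rewrite /bf mxE exchange_big; apply: eq_bigr => b _; rewrite mxE mulr_suml.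
by apply: eq_bigr => a _; rewrite !mxE.
Qed.

Lemma bfDl n (M : 'M[C]_n) u1 u2 v : bf M (u1 + u2) v = bf M u1 v + bf M u2 v.
Proof. by rewrite /bf adjmxD !mulmxDl mxE. Qed.
Lemma bfDr n (M : 'M[C]_n) u v1 v2 : bf M u (v1 + v2) = bf M u v1 + bf M u v2.
Proof. by rewrite /bf mulmxDr mxE. Qed.
Lemma bfZl n (M : 'M[C]_n) c u v : bf M (c *: u) v = c^* * bf M u v.
Proof. by rewrite /bf adjmxZ -!scalemxAl mxE. Qed.
Lemma bfZr n (M : 'M[C]_n) c u v : bf M u (c *: v) = c * bf M u v.
Proof. by rewrite /bf -scalemxAr mxE. Qed.
Lemma bf_delta n (M : 'M[C]_n) a b : bf M (delta_mx a 0) (delta_mx b 0) = M a b.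
Proof.
rewrite bfE (bigD1 a) //= [X in _ + X]big1 ?addr0; last first.
  move=> x /negbTE xa; apply: big1 => y _; by rewrite !mxE xa /= rmorph0 !mul0r.
rewrite (bigD1 b) //= [X in _ + X]big1 ?addr0; last first.
  by move=> y /negbTE yb; rewrite !mxE yb /= mulr0.
by rewrite !mxE !eqxx /= rmorph1 mul1r mulr1.
Qed.

Lemma herm_entry n (M : 'M[C]_n) a b : adjmx M = M -> M b a = (M a b)^*.
Proof. by move=> hM; rewrite -{1}hM /adjmx !mxE. Qed.

Lemma bf_herm_conj n (M : 'M[C]_n) v : adjmx M = M -> (bf M v v)^* = bf M v v.
Proof.
move=> hM; rewrite !bfE rmorph_sum [RHS]exchange_big; apply: eq_bigr => a _.
rewrite rmorph_sum; apply: eq_bigr => b _ /=.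
by rewrite !rmorphM /= conjCK (herm_entry _ _ hM) conjCK; ring.
Qed.


Lemma bfDM n (A B : 'M[C]_n) u v : bf (A + B) u v = bf A u v + bf B u v.
Proof. by rewrite /bf mulmxDr mulmxDl mxE. Qed.
Lemma bfZM n (A : 'M[C]_n) c u v : bf (c *: A) u v = c * bf A u v.
Proof. by rewrite /bf -scalemxAr -scalemxAl mxE. Qed.
Lemma bfNM n (A : 'M[C]_n) u v : bf (- A) u v = - bf A u v.
Proof. by rewrite -scaleN1r bfZM mulN1r. Qed.
Lemma bf1 n (v : 'cV[C]_n) : bf 1%:M v v = ip v v.
Proof. by rewrite /bf mulmx1. Qed.

Lemma psd_entry_le1 n (M : 'M[C]_n) : psd M -> \tr M = 1 -> forall x y, `|M x y| <= 1.
Proof.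
move=> [hM pM] tr1 x y.
have diag0 a : 0 <= M a a by rewrite -bf_delta; exact: pM.
have diag1 a : M a a <= 1.
  by rewrite -tr1 /mxtrace (bigD1 a) //= lerDl sumr_ge0.
set z := M x y.
have := pM (delta_mx x 0 + (- z^*) *: delta_mx y 0).
rewrite -/(bf M _ _) bfDl !bfDr !bfZl !bfZr !bf_delta (herm_entry x y hM) -/z.
rewrite rmorphN /= conjCK.
set r := z * z^*.
have r0 : 0 <= r by exact: mul_conjC_ge0.
have -> : M x x + - z^* * z + (- z * z^* + - z * (- z^* * M y y)) = M x x - r - r + r * M y y.
  rewrite /r; ring.
move=> h.
have h1 : r * M y y <= r by rewrite ler_piMr.
have h2 : M x x - r - r + r * M y y <= 1 - r - r + r.
  by apply: lerD => //; apply: lerD => //; apply: lerD.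
have : 0 <= 1 - r by rewrite -[1 - r](subrK r) (le_trans h h2).
rewrite subr_ge0 /r -normCK expr_le1 //.
Qed.

Lemma amgm (a b : C) : 0 <= a -> 0 <= b -> a * b <= a ^+ 2 + b ^+ 2.
Proof.
move=> a0 b0.
have rab : a - b \is Num.real by rewrite rpredB // ger0_real.
have := real_exprn_even_ge0 (n:=2) rab isT.
have -> : (a - b) ^+ 2 = a ^+ 2 + b ^+ 2 - (a * b) *+ 2 by rewrite sqrrB; ring.
rewrite subr_ge0 => h; apply: le_trans h.
by rewrite mulr2n lerDr mulr_ge0.
Qed.

Lemma qf_bound n (M : 'M[C]_n) v : adjmx M = M -> (forall a b, `|M a b| <= 1) ->
  - ((n + n)%:R * ip v v) <= bf M v v.
Proof.
move=> hM hb.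
have zr : bf M v v \is Num.real by rewrite CrealE bf_herm_conj.
suff hz : `|bf M v v| <= (n + n)%:R * ip v v by move: hz; rewrite real_ler_norml // => /andP[].
rewrite bfE; apply: le_trans (ler_norm_sum _ _ _) _.
apply: le_trans (_ : \sum_a \sum_b (`|v a 0| ^+ 2 + `|v b 0| ^+ 2) <= _).
  apply: ler_sum => a _; apply: le_trans (ler_norm_sum _ _ _) _.
  apply: ler_sum => b _; rewrite !normrM norm_conjC.
  apply: le_trans (amgm (normr_ge0 _) (normr_ge0 _)).
  rewrite -mulrA ler_wpM2l // ler_piMl //.
have -> : ip v v = \sum_a `|v a 0| ^+ 2 by rewrite ipE; apply: eq_bigr => a _; rewrite normCKC.
rewrite (eq_bigr (fun a => `|v a 0| ^+ 2 *+ n + \sum_b `|v b 0| ^+ 2)); last first.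
  by move=> a _; rewrite big_split /= sumr_const card_ord.
rewrite big_split /= sumr_const card_ord sumrMnl.
by rewrite mulr_natl mulrnDr.
Qed.


Lemma ptransE d (s : 'M[C]_(d * d)) i j k l :
  ptrans s (mxtens_index (i, j)) (mxtens_index (k, l)) =
  s (mxtens_index (i, l)) (mxtens_index (k, j)).
Proof. by rewrite mxE !mxtens_indexK. Qed.

Lemma ptrans_sum d N (q : 'I_N -> C) (M : 'I_N -> 'M[C]_(d * d)) :
  ptrans (\sum_k q k *: M k) = \sum_k q k *: ptrans (M k).
Proof.
apply/matrixP => a b; rewrite !mxE !summxE; apply: eq_bigr => k _.
by rewrite !mxE.
Qed.

Lemma ptransD d (A B : 'M[C]_(d * d)) : ptrans (A + B) = ptrans A + ptrans B.
Proof. by apply/matrixP => a b; rewrite !mxE. Qed.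

Lemma ptransZ d c (A : 'M[C]_(d * d)) : ptrans (c *: A) = c *: ptrans A.
Proof. by apply/matrixP => a b; rewrite !mxE. Qed.

Lemma ptrans1 d : ptrans (1%:M : 'M[C]_(d * d)) = 1%:M.
Proof.
apply/matrixP => a b; case: (mxtens_indexP a) => i j; case: (mxtens_indexP b) => k l.
rewrite ptransE !mxE !(inj_eq (can_inj (@mxtens_indexK _ _))) !xpair_eqE.
by rewrite [l == j]eq_sym.
Qed.

Definition phi d : 'cV[C]_(d * d) :=
  \col_a (((mxtens_unindex a).1 == (mxtens_unindex a).2)%:R).

Lemma ptrans_swap d : ptrans (swapop d) = ketbra (phi d).
Proof.
apply/matrixP => a b; case: (mxtens_indexP a) => i j; case: (mxtens_indexP b) => k l.
rewrite ptransE swapE ketbraE !mxE !mxtens_indexK /= rmorph_nat.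
by rewrite -natrM mulnb [l == k]eq_sym.
Qed.

Lemma ketbra_tens d (a b : 'cV[C]_d) : ketbra a *t ketbra b = ketbra (kron a b).
Proof.
apply/matrixP => x y; case: (mxtens_indexP x) => i j; case: (mxtens_indexP y) => k l.
by rewrite tensmxE !ketbraE !kronE rmorphM; ring.
Qed.

Definition cconj n (w : 'cV[C]_n) : 'cV[C]_n := \col_i (w i 0)^*.

Lemma ptrans_ketbra_kron d (u w : 'cV[C]_d) :
  ptrans (ketbra (kron u w)) = ketbra (kron u (cconj w)).
Proof.
apply/matrixP => x y; case: (mxtens_indexP x) => i j; case: (mxtens_indexP y) => k l.
rewrite ptransE !ketbraE !kronE !mxE !rmorphM /= conjCK; ring.
Qed.

Lemma adj_ptrans d (s : 'M[C]_(d * d)) : adjmx (ptrans s) = ptrans (adjmx s).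
Proof.
apply/matrixP => x y; case: (mxtens_indexP x) => i j; case: (mxtens_indexP y) => k l.
by rewrite /adjmx mxE ptransE /= !mxE !mxtens_indexK.
Qed.


Lemma psdD n (A B : 'M[C]_n) : psd A -> psd B -> psd (A + B).
Proof.
move=> [hA pA] [hB pB]; split; first by rewrite adjmxD hA hB.
by move=> v; rewrite -/(bf _ v v) bfDM addr_ge0 //; [exact: pA | exact: pB].
Qed.

Lemma psdZ n c (A : 'M[C]_n) : 0 <= c -> psd A -> psd (c *: A).
Proof.
move=> c0 [hA pA]; split; first by rewrite adjmxZ hA geC0_conj.
by move=> v; rewrite -/(bf _ v v) bfZM mulr_ge0 //; exact: pA.
Qed.

Lemma psd_tr_ge0 n (A : 'M[C]_n) : psd A -> 0 <= \tr A.
Proof.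
move=> [hA pA]; rewrite /mxtrace; apply: sumr_ge0 => a _.
by rewrite -bf_delta; exact: pA.
Qed.

Lemma psd_ketbra n (x : 'cV[C]_n) : psd (ketbra x).
Proof.
split; first exact: adj_ketbra.
by move=> v; rewrite -/(bf _ v v) bf_ketbra mul_conjC_ge0.
Qed.

Lemma tr_mulA3 n (A B D : 'M[C]_n) : \tr (A *m B *m D) = \tr (D *m A *m B).
Proof. by rewrite mxtrace_mulC mulmxA. Qed.

Lemma exists_pos d (rho : 'M[C]_(d * d)) : antisym_state rho ->
  exists s, ppt_feasible rho s /\ 0 < \tr (PA d *m s).
Proof.
move=> [[[hr pr] tr1] eqr]; rewrite /ppt_feasible.
set c : C := ((d * d) + (d * d))%:R.
have c0 : 0 <= c by rewrite ler0n.
set S : 'M[C]_(d * d) := 1%:M + swapop d.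
have hS : adjmx S = S by rewrite /S adjmxD adjmx1 adj_swap.
have SS : S *m S = 2%:R *: S.
  rewrite /S mulmxDl !mulmxDr !mul1mx !mulmx1 swap2 scaler_nat mulr2n.
  by rewrite [swapop d + 1%:M]addrC.
have psdS : psd S.
  split => // v; rewrite -/(bf _ v v).
  have : 0 <= ip (S *m v) (S *m v) by exact: ipvv_ge0.
  rewrite /ip adjmxM hS mulmxA -[adjmx v *m S *m S]mulmxA SS -scalemxAr -scalemxAl mxE.
  by rewrite pmulr_rge0 // ltr0n.
have PAS : PA d *m S = 0.
  rewrite /PA /S -scalemxAl mulmxBl !mul1mx mulmxDr mulmx1 swap2.
  by rewrite [swapop d + 1%:M]addrC subrr scaler0.
have trPArho : \tr (PA d *m rho) = 1.
  by rewrite -tr1 {2}eqr tr_mulA3 PA2.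
move: PAS trPArho eqr; generalize (PA (C:=C) d) => P PAS trPArho eqr.
set X := rho + c *: S.
set t := \tr X.
have t1 : 1 <= t by rewrite /t mxtraceD tr1 mxtraceZ lerDl mulr_ge0 // psd_tr_ge0.
have t0 : 0 < t by apply: lt_le_trans t1; exact: ltr01.
have tn0 : t != 0 by rewrite gt_eqF.
have PAXPA : P *m X *m P = rho.
  by rewrite /X mulmxDr mulmxDl -scalemxAr -scalemxAl PAS mul0mx scaler0 addr0 -eqr.
have trPAX : \tr (P *m X) = 1.
  by rewrite /X mulmxDr mxtraceD -scalemxAr PAS scaler0 mxtrace0 addr0.
exists (t^-1 *: X); split; last by rewrite -scalemxAr mxtraceZ trPAX mulr1 invr_gt0.
split.
- by rewrite -scalemxAr -scalemxAl PAXPA mxtraceZ trPAX mulr1.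
- apply: psdZ; first by rewrite invr_ge0 ltW.
  by apply: psdD; [split | apply: psdZ].
- by rewrite mxtraceZ mulVf.
- rewrite ptransZ; apply: psdZ; first by rewrite invr_ge0 ltW.
  rewrite /X ptransD ptransZ /S ptransD ptrans1 ptrans_swap.
  split.
    by rewrite adjmxD adjmxZ adjmxD adj_ptrans hr adjmx1 adj_ketbra geC0_conj.
  move=> v; rewrite -/(bf _ v v) bfDM bfZM bfDM bf1.
  have hb : - (c * ip v v) <= bf (ptrans rho) v v.
    rewrite /c; apply: qf_bound; first by rewrite adj_ptrans hr.
    by move=> a b; rewrite mxE; exact: (psd_entry_le1 (conj hr pr) tr1).
  have hk : 0 <= bf (ketbra (phi d)) v v by rewrite bf_ketbra mul_conjC_ge0.
  rewrite mulrDr addrA; apply: addr_ge0; last exact: mulr_ge0.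
  by rewrite -[X in 0 <= _ + X]opprK subr_ge0.
Qed.


Lemma tr_ketbraM n (M : 'M[C]_n) z : \tr (M *m ketbra z) = bf M z z.
Proof. by rewrite /ketbra mulmxA mxtrace_mulC mulmxA /mxtrace big_ord1. Qed.

Lemma tr_ketbra n (z : 'cV[C]_n) : \tr (ketbra z) = ip z z.
Proof. by rewrite /ketbra mxtrace_mulC /mxtrace big_ord1. Qed.

Lemma trM_sum n N (M : 'M[C]_n) (q : 'I_N -> C) z :
  \tr (M *m \sum_k q k *: ketbra (z k)) = \sum_k q k * bf M (z k) (z k).
Proof.
rewrite mulmx_sumr raddf_sum /=; apply: eq_bigr => k _.
by rewrite -scalemxAr mxtraceZ tr_ketbraM.
Qed.

Lemma tr_sum n N (q : 'I_N -> C) (z : 'I_N -> 'cV[C]_n) :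
  \tr (\sum_k q k *: ketbra (z k)) = \sum_k q k * ip (z k) (z k).
Proof. by rewrite raddf_sum /=; apply: eq_bigr => k _; rewrite mxtraceZ tr_ketbra. Qed.

Lemma MSM_sum n N (M : 'M[C]_n) (q : 'I_N -> C) (K : 'I_N -> 'M[C]_n) :
  M *m (\sum_k q k *: K k) *m M = \sum_k q k *: (M *m K k *m M).
Proof.
rewrite mulmx_sumr mulmx_suml; apply: eq_bigr => k _.
by rewrite -scalemxAr -scalemxAl.
Qed.

Lemma PA_ketbra d (z : 'cV[C]_(d * d)) : PA d *m ketbra z *m PA d = ketbra (PA d *m z).
Proof.
by rewrite /ketbra adjmxM adj_PA !mulmxA.
Qed.

Lemma bfPA d (z : 'cV[C]_(d * d)) : bf (PA d) z z = ip (PA d *m z) (PA d *m z).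
Proof. by rewrite /ip /bf adjmxM adj_PA mulmxA -[_ *m PA d *m PA d]mulmxA PA2. Qed.

Lemma ipBr n (a b c : 'cV[C]_n) : ip a (b - c) = ip a b - ip a c.
Proof. by rewrite /ip mulmxBr !mxE. Qed.
Lemma ipZr n (a b : 'cV[C]_n) x : ip a (x *: b) = x * ip a b.
Proof. by rewrite /ip -scalemxAr mxE. Qed.

Lemma ip_proj n (a b : 'cV[C]_n) : ip a a = 1 -> ip a (b - ip a b *: a) = 0.
Proof. by move=> h; rewrite ipBr ipZr h mulr1 subrr. Qed.

Lemma kronBr m n (a : 'cV[C]_m) (b c : 'cV[C]_n) : kron a (b - c) = kron a b - kron a c.
Proof. by apply/matrixP => i j; rewrite !mxE mulrBr. Qed.
Lemma kronZr m n (a : 'cV[C]_m) (b : 'cV[C]_n) x : kron a (x *: b) = x *: kron a b.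
Proof. by apply/matrixP => i j; rewrite !mxE mulrCA. Qed.

Lemma kron_proj d (a b : 'cV[C]_d) x : PA d *m kron a (b - x *: a) = PA d *m kron a b.
Proof.
rewrite kronBr kronZr mulmxBr.
have -> : PA d *m (x *: kron a a) = x *: (PA d *m kron a a) by rewrite scalemxAr.
by rewrite PA_kron_same scaler0 subr0.
Qed.

Lemma bf_PA_kron d (a b : 'cV[C]_d) : ip a a = 1 -> ip a b = 0 ->
  bf (PA d) (kron a b) (kron a b) = 2^-1 * ip b b.
Proof.
move=> ha hab.
have -> : bf (PA d) (kron a b) (kron a b) =
  2^-1 * (ip (kron a b) (kron a b) - ip (kron a b) (swapop d *m kron a b)).
  rewrite /PA bfZM bfDM bfNM bf1; congr (_ * (_ - _)).
  by rewrite /bf /ip mulmxA.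
by rewrite swap_kron !ip_kron ha hab mul0r mul1r subr0.
Qed.


Lemma sep_improve d (rho sigma : 'M[C]_(d * d)) :
  ppt_feasible rho sigma -> separable sigma -> 0 < \tr (PA d *m sigma) ->
  exists s, ppt_feasible rho s /\ \tr (PA d *m s) = 2^-1.
Proof.
move=> [e1 _ _ _] [N [q [al [be [q0 qs un eS]]]]].
have {}eS : sigma = \sum_k q k *: ketbra (kron (al k) (be k)).
  by rewrite eS; apply: eq_bigr => k _; rewrite ketbra_tens.
set x := fun k => kron (al k) (be k).
set b' := fun k => be k - ip (al k) (be k) *: al k.
set y := fun k => kron (al k) (b' k).
have hPy k : PA d *m y k = PA d *m x k by rewrite /y /x /b' kron_proj.
have hbf k : bf (PA d) (y k) (y k) = bf (PA d) (x k) (x k) by rewrite !bfPA hPy.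
have hip k : ip (y k) (y k) = 2%:R * bf (PA d) (y k) (y k).
  have ua : ip (al k) (al k) = 1 by have [] := un k.
  rewrite /y bf_PA_kron //; last exact: ip_proj.
  by rewrite ip_kron ua mul1r mulrA mulfV ?mul1r // pnatr_eq0.
set p := \tr (PA d *m sigma).
move=> p0.
set S2 := \sum_k q k *: ketbra (y k).
have trPS : \tr (PA d *m S2) = p.
  by rewrite /p eS !trM_sum; apply: eq_bigr => k _; rewrite hbf.
have trS : \tr S2 = 2%:R * p.
  rewrite /S2 tr_sum -trPS trM_sum mulr_sumr; apply: eq_bigr => k _.
  by rewrite hip mulrCA.
have PSP : PA d *m S2 *m PA d = p *: rho.
  rewrite -e1 eS !MSM_sum; apply: eq_bigr => k _.
  by rewrite !PA_ketbra hPy.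
set c := (2%:R * p)^-1.
have c0 : 0 <= c by rewrite invr_ge0 mulr_ge0 // ?ler0n ltW.
have cp : c * p = 2^-1 by rewrite /c invfM -mulrA mulVf ?mulr1 // gt_eqF.
have es : c *: S2 = \sum_k (c * q k) *: ketbra (y k).
  by rewrite /S2 scaler_sumr; apply: eq_bigr => k _; rewrite scalerA.
have eA : PA d *m (c *: S2) = c *: (PA d *m S2) by rewrite (scalemxAr c (PA d) S2).
exists (c *: S2); split; last by rewrite eA mxtraceZ trPS cp.
split.
- by rewrite eA -(scalemxAl c (PA d *m S2) (PA d)) PSP mxtraceZ trPS scalerA.
- by rewrite es; apply: psd_ketbra_sum => k; rewrite mulr_ge0.
- by rewrite mxtraceZ trS mulVf // mulf_neq0 ?pnatr_eq0 ?gt_eqF.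
- rewrite es ptrans_sum.
  under eq_bigr => k _ do rewrite /y ptrans_ketbra_kron.
  by apply: psd_ketbra_sum => k; rewrite mulr_ge0.
Qed.

End H.

Theorem mainTheorem3 (C : numClosedFieldType) (d : nat)
    (rho sigma : 'M[C]_(d * d)) :
  antisym_state rho ->
  ppt_optimal rho sigma ->
  \tr (PA d *m sigma) < 2^-1 ->
  entangled sigma /\ psd (ptrans sigma).
Proof.
move=> hr [hf hopt] hp; split; last by case: hf.
move=> hsep.
have [p0|np0] := boolP (0 < \tr (PA d *m sigma)).
  have [s [fs vs]] := sep_improve hf hsep p0.
  have := hopt s fs; rewrite vs => h.
  by have := lt_le_trans hp h; rewrite ltxx.
have [s [fs vs]] := exists_pos hr.
have h := hopt s fs.
by move: np0; rewrite (lt_le_trans vs h).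
Qed.
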